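(* Let $f:G\to H$ be a morphism of cubical $\omega$-categories with connections such that the induced morphism of $\omega$-categories $\gamma f:\gamma G\to\gamma H$ is an isomorphism. Then $f$ is an isomorphism.
   Context: A cubical $\omega$-category with connections $G$ consists of sets $G_n$ ($n\ge0$), face maps $\partial^\alpha_i:G_n\to G_{n-1}$, degeneracies $\varepsilon_i:G_{n-1}\to G_n$, connections $\Gamma^\alpha_i:G_n\to G_{n+1}$ ($1\le i\le n$, $\alpha=\pm$) and partial compositions $\circ_j$ on $G_n$ ($1\le j\le n$, $a\circ_jb$ defined iff $\partial^+_ja=\partial^-_jb$) satisfying: the cubical identities $\partial^\alpha_i\partial^\beta_j=\partial^\beta_{j-1}\partial^\alpha_i$ ($i<j$), $\varepsilon_i\varepsilon_j=\varepsilon_{j+1}\varepsilon_i$ ($i\le j$), $\partial^\alpha_i\varepsilon_j=\varepsilon_{j-1}\partial^\alpha_i$ ($i<j$), $\varepsilon_j\partial^\alpha_{i-1}$ ($i>j$), $\mathrm{id}$ ($i=j$); the connection identities $\Gamma^\alpha_i\Gamma^\beta_j=\Gamma^\beta_{j+1}\Gamma^\alpha_i$ ($i<j$), $\Gamma^\alpha_i\Gamma^\alpha_i=\Gamma^\alpha_{i+1}\Gamma^\alpha_i$, $\Gamma^\alpha_i\varepsilon_j=\varepsilon_{j+1}\Gamma^\alpha_i$ ($i<j$), $\varepsilon_j\Gamma^\alpha_{i-1}$ ($i>j$), $\Gamma^\alpha_j\varepsilon_j=\varepsilon_{j+1}\varepsilon_j$, $\partial^\alpha_i\Gamma^\beta_j=\Gamma^\beta_{j-1}\partial^\alpha_i$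 ($i<j$), $\Gamma^\beta_j\partial^\alpha_{i-1}$ ($i>j+1$), $\partial^\alpha_j\Gamma^\alpha_j=\partial^\alpha_{j+1}\Gamma^\alpha_j=\mathrm{id}$, $\partial^\alpha_j\Gamma^{-\alpha}_j=\partial^\alpha_{j+1}\Gamma^{-\alpha}_j=\varepsilon_j\partial^\alpha_j$; $\partial^-_j(a\circ_jb)=\partial^-_ja$, $\partial^+_j(a\circ_jb)=\partial^+_jb$, $\partial^\alpha_i(a\circ_jb)=\partial^\alpha_ia\circ_{j-1}\partial^\alpha_ib$ ($i<j$), $\partial^\alpha_ia\circ_j\partial^\alpha_ib$ ($i>j$); interchange for $i\ne j$; $\varepsilon_i(a\circ_jb)=\varepsilon_ia\circ_{j+1}\varepsilon_ib$ ($i\le j$), $\varepsilon_ia\circ_j\varepsilon_ib$ ($i>j$); $\Gamma^\alpha_i(a\circ_jb)=\Gamma^\alpha_ia\circ_{j+1}\Gamma^\alpha_ib$ ($i<j$), $\Gamma^\alpha_ia\circ_j\Gamma^\alpha_ib$ ($i>j$); $\Gamma^+_j(a\circ_jb)=(\Gamma^+_ja\circ_j\varepsilon_ja)\circ_{j+1}(\varepsilon_{j+1}a\circ_j\Gamma^+_jb)$, $\Gamma^-_j(a\circ_jb)=(\Gamma^-_ja\circ_j\varepsilon_{j+1}b)\circ_{j+1}(\varepsilon_jb\circ_j\Gamma^-_jb)$; each $\circ_j$ a category structure with identities $\varepsilon_jy$; $\Gamma^+_ix\circ_i\Gamma^-_ix=\varepsilon_{i+1}x$, $\Gamma^+_ix\circ_{i+1}\Gamma^-_ix=\varepsilon_ix$.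 Morphisms preserve all this structure. Folding operations on $G_n$: $\psi_ix=\Gamma^+_i\partial^-_{i+1}x\circ_{i+1}x\circ_{i+1}\Gamma^-_i\partial^+_{i+1}x$ ($1\le i\le n-1$), $\Psi_r=\psi_{r-1}\cdots\psi_1$, $\Phi_n=\Psi_1\Psi_2\cdots\Psi_n$ ($\Phi_0=\Phi_1=\mathrm{id}$). $\gamma G$: the set $\Phi_n(G_n)$ is an $\omega$-category (globular strict $\omega$-category) with $d^\alpha_px=\varepsilon_1^{n-p}(\partial^\alpha_1)^{n-p}x$ and $x\#_py=x\circ_{n-p}y$ for $0\le p<n$, and $d^\alpha_px=x$ with only composites $x\#_px=x$ for $p\ge n$; $\varepsilon_1$ maps $\Phi_n(G_n)$ homomorphically into $\Phi_{n+1}(G_{n+1})$, and $\gamma G$ is the colimit of $\Phi_0(G_0)\xrightarrow{\varepsilon_1}\Phi_1(G_1)\xrightarrow{\varepsilon_1}\cdots$. A morphism $f$ commutes with $\Phi_n$ and $\varepsilon_1$, and $\gamma f$ is the induced morphism of colimits. *)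

(* Defs.v *)
From mathcomp Require Import all_boot.

(* Conventions:
   - cell n   = G_n.
   - face n i a    : G_{n+1} -> G_n     is  d^a_i   (valid for 1 <= i <= n+1),
   - degen n i     : G_n -> G_{n+1}     is  eps_i   (valid for 1 <= i <= n+1),
   - conn n i a    : G_n -> G_{n+1}     is  Gamma^a_i (valid for 1 <= i <= n),
   - comp n j a b  : on G_{n+1}         is  a o_j b (valid for 1 <= j <= n+1),
     meaningful only when face n j true a = face n j false b.
   The sign alpha is a bool: true = +, false = -.
   Outside the valid ranges / domain of definition the operations are total
   but unconstrained (junk); all axioms and morphism conditions are only
   imposed in the valid ranges. *)

Record CubCat := {
  cell : nat -> Type;
  face : forall n, nat -> bool -> cell n.+1 -> cell n;
  degen : forall n, nat -> cell n -> cell n.+1;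
  conn : forall n, nat -> bool -> cell n -> cell n.+1;
  comp : forall n, nat -> cell n.+1 -> cell n.+1 -> cell n.+1;
  face_face : forall n i j a b (x : cell n.+2), 1 <= i < j -> j <= n.+2 ->
    face n i a (face n.+1 j b x) = face n j.-1 b (face n.+1 i a x);
  degen_degen : forall n i j (x : cell n), 1 <= i <= j -> j <= n.+1 ->
    degen n.+1 i (degen n j x) = degen n.+1 j.+1 (degen n i x);
  face_degen_lt : forall n i j a (x : cell n.+1), 1 <= i < j -> j <= n.+2 ->
    face n.+1 i a (degen n.+1 j x) = degen n j.-1 (face n i a x);
  face_degen_gt : forall n i j a (x : cell n.+1), 1 <= j < i -> i <= n.+2 ->
    face n.+1 i a (degen n.+1 j x) = degen n j (face n i.-1 a x);
  face_degen_eq : forall n i a (x : cell n), 1 <= i <= n.+1 ->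
    face n i a (degen n i x) = x;
  conn_conn_lt : forall n i j a b (x : cell n), 1 <= i < j -> j <= n ->
    conn n.+1 i a (conn n j b x) = conn n.+1 j.+1 b (conn n i a x);
  conn_conn_eq : forall n i a (x : cell n), 1 <= i <= n ->
    conn n.+1 i a (conn n i a x) = conn n.+1 i.+1 a (conn n i a x);
  conn_degen_lt : forall n i j a (x : cell n), 1 <= i < j -> j <= n.+1 ->
    conn n.+1 i a (degen n j x) = degen n.+1 j.+1 (conn n i a x);
  conn_degen_gt : forall n i j a (x : cell n), 1 <= j < i -> i <= n.+1 ->
    conn n.+1 i a (degen n j x) = degen n.+1 j (conn n i.-1 a x);
  conn_degen_eq : forall n j a (x : cell n), 1 <= j <= n.+1 ->
    conn n.+1 j a (degen n j x) = degen n.+1 j.+1 (degen n j x);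
  face_conn_lt : forall n i j a b (x : cell n.+1), 1 <= i < j -> j <= n.+1 ->
    face n.+1 i a (conn n.+1 j b x) = conn n j.-1 b (face n i a x);
  face_conn_gt : forall n i j a b (x : cell n.+1), 1 <= j -> j.+1 < i -> i <= n.+2 ->
    face n.+1 i a (conn n.+1 j b x) = conn n j b (face n i.-1 a x);
  face_conn_same : forall n j a (x : cell n), 1 <= j <= n ->
    face n j a (conn n j a x) = x /\ face n j.+1 a (conn n j a x) = x;
  face_conn_opp : forall n j a (x : cell n.+1), 1 <= j <= n.+1 ->
    face n.+1 j a (conn n.+1 j (~~ a) x) = degen n j (face n j a x) /\
    face n.+1 j.+1 a (conn n.+1 j (~~ a) x) = degen n j (face n j a x);
  comp_face_minus : forall n j (a b : cell n.+1), 1 <= j <= n.+1 ->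
    face n j true a = face n j false b ->
    face n j false (comp n j a b) = face n j false a;
  comp_face_plus : forall n j (a b : cell n.+1), 1 <= j <= n.+1 ->
    face n j true a = face n j false b ->
    face n j true (comp n j a b) = face n j true b;
  comp_face_lt : forall n i j c (a b : cell n.+2), 1 <= i < j -> j <= n.+2 ->
    face n.+1 j true a = face n.+1 j false b ->
    face n.+1 i c (comp n.+1 j a b) = comp n j.-1 (face n.+1 i c a) (face n.+1 i c b);
  comp_face_gt : forall n i j c (a b : cell n.+2), 1 <= j < i -> i <= n.+2 ->
    face n.+1 j true a = face n.+1 j false b ->
    face n.+1 i c (comp n.+1 j a b) = comp n j (face n.+1 i c a) (face n.+1 i c b);
  interchange : forall n i j (a b c d : cell n.+1),
    1 <= i <= n.+1 -> 1 <= j <= n.+1 -> i != j ->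
    face n i true a = face n i false b -> face n i true c = face n i false d ->
    face n j true a = face n j false c -> face n j true b = face n j false d ->
    comp n j (comp n i a b) (comp n i c d) = comp n i (comp n j a c) (comp n j b d);
  degen_comp_le : forall n i j (a b : cell n.+1), 1 <= i <= j -> j <= n.+1 ->
    face n j true a = face n j false b ->
    degen n.+1 i (comp n j a b) = comp n.+1 j.+1 (degen n.+1 i a) (degen n.+1 i b);
  degen_comp_gt : forall n i j (a b : cell n.+1), 1 <= j < i -> i <= n.+2 ->
    face n j true a = face n j false b ->
    degen n.+1 i (comp n j a b) = comp n.+1 j (degen n.+1 i a) (degen n.+1 i b);
  conn_comp_lt : forall n i j c (a b : cell n.+1), 1 <= i < j -> j <= n.+1 ->
    face n j true a = face n j false b ->
    conn n.+1 i c (comp n j a b) = comp n.+1 j.+1 (conn n.+1 i c a) (conn n.+1 i c b);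
  conn_comp_gt : forall n i j c (a b : cell n.+1), 1 <= j < i -> i <= n.+1 ->
    face n j true a = face n j false b ->
    conn n.+1 i c (comp n j a b) = comp n.+1 j (conn n.+1 i c a) (conn n.+1 i c b);
  conn_plus_comp : forall n j (a b : cell n.+1), 1 <= j <= n.+1 ->
    face n j true a = face n j false b ->
    conn n.+1 j true (comp n j a b) =
    comp n.+1 j.+1 (comp n.+1 j (conn n.+1 j true a) (degen n.+1 j a))
                   (comp n.+1 j (degen n.+1 j.+1 a) (conn n.+1 j true b));
  conn_minus_comp : forall n j (a b : cell n.+1), 1 <= j <= n.+1 ->
    face n j true a = face n j false b ->
    conn n.+1 j false (comp n j a b) =
    comp n.+1 j.+1 (comp n.+1 j (conn n.+1 j false a) (degen n.+1 j.+1 b))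
                   (comp n.+1 j (degen n.+1 j b) (conn n.+1 j false b));
  comp_assoc : forall n j (a b c : cell n.+1), 1 <= j <= n.+1 ->
    face n j true a = face n j false b -> face n j true b = face n j false c ->
    comp n j (comp n j a b) c = comp n j a (comp n j b c);
  comp_id_l : forall n j (a : cell n.+1), 1 <= j <= n.+1 ->
    comp n j (degen n j (face n j false a)) a = a;
  comp_id_r : forall n j (a : cell n.+1), 1 <= j <= n.+1 ->
    comp n j a (degen n j (face n j true a)) = a;
  conn_cancel : forall n i (x : cell n.+1), 1 <= i <= n.+1 ->
    comp n.+1 i (conn n.+1 i true x) (conn n.+1 i false x) = degen n.+1 i.+1 x /\
    comp n.+1 i.+1 (conn n.+1 i true x) (conn n.+1 i false x) = degen n.+1 i x
}.

Record CubMorph (G H : CubCat) := {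
  fmap : forall n, cell G n -> cell H n;
  fmap_face : forall n i a (x : cell G n.+1), 1 <= i <= n.+1 ->
    fmap n (face G n i a x) = face H n i a (fmap n.+1 x);
  fmap_degen : forall n i (x : cell G n), 1 <= i <= n.+1 ->
    fmap n.+1 (degen G n i x) = degen H n i (fmap n x);
  fmap_conn : forall n i a (x : cell G n), 1 <= i <= n ->
    fmap n.+1 (conn G n i a x) = conn H n i a (fmap n x);
  fmap_comp : forall n j (x y : cell G n.+1), 1 <= j <= n.+1 ->
    face G n j true x = face G n j false y ->
    fmap n.+1 (comp G n j x y) = comp H n j (fmap n.+1 x) (fmap n.+1 y)
}.

Definition cub_iso (G H : CubCat) (f : CubMorph G H) : Prop :=
  exists g : CubMorph H G,
    (forall n (x : cell G n), fmap H G g n (fmap G H f n x) = x) /\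
    (forall n (y : cell H n), fmap G H f n (fmap H G g n y) = y).

Definition psi (G : CubCat) (n i : nat) (x : cell G n.+2) : cell G n.+2 :=
  comp G n.+1 i.+1
    (comp G n.+1 i.+1 (conn G n.+1 i true (face G n.+1 i.+1 false x)) x)
    (conn G n.+1 i false (face G n.+1 i.+1 true x)).

(* psi_i on G_m (only meaningful for 1 <= i <= m-1; identity for m <= 1,
   where there are no folding operations). *)
Definition psiAt (G : CubCat) (m i : nat) : cell G m -> cell G m :=
  match m as m0 return cell G m0 -> cell G m0 with
  | S (S n) => psi G n i
  | _ => fun x => x
  end.

(* Psi_r = psi_{r-1} ... psi_1  (psi_1 applied first). *)
Definition PsiAt (G : CubCat) (m r : nat) (x : cell G m) : cell G m :=
  foldl (fun y i => psiAt G m i y) x (iota 1 r.-1).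

(* Phi_m = Psi_1 Psi_2 ... Psi_m  (Psi_m applied first); Phi_0 = id. *)
Definition PhiAt (G : CubCat) (m : nat) (x : cell G m) : cell G m :=
  foldl (fun y r => PsiAt G m r y) x (rev (iota 1 m)).

(* ---- The omega-category gamma G, as a setoid presentation of the colimit
   of Phi_0(G_0) -eps_1-> Phi_1(G_1) -eps_1-> ... ---- *)

Definition elt (G : CubCat) := {n : nat & cell G n}.

Definition inPhi (G : CubCat) (t : elt G) : Prop :=
  exists y, projT2 t = PhiAt G (projT1 t) y.

Fixpoint liftk (G : CubCat) (k n : nat) : cell G n -> cell G (k + n) :=
  match k as k0 return cell G n -> cell G (k0 + n) with
  | 0 => fun x => x
  | S k' => fun x => degen G (k' + n) 1 (liftk G k' n x)
  end.

Definition up (G : CubCat) (t : elt G) (k : nat) : elt G :=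
  existT _ (k + projT1 t) (liftk G k (projT1 t) (projT2 t)).

Definition crel (G : CubCat) (t u : elt G) : Prop :=
  exists k l, up G t k = up G u l.

Fixpoint downto (G : CubCat) (a : bool) (p n : nat) : cell G n -> elt G :=
  match n as n0 return cell G n0 -> elt G with
  | 0 => fun x => existT _ 0 x
  | S n' => fun x => if p <= n' then downto G a p n' (face G n' 1 a x)
                     else existT _ (S n') x
  end.

(* d^a_p x = eps_1^{n-p} (d^a_1)^{n-p} x for p < n, and x for p >= n;
   in the colimit eps_1^{n-p} can be dropped. *)
Definition dglob (G : CubCat) (a : bool) (p : nat) (t : elt G) : elt G :=
  downto G a p (projT1 t) (projT2 t).

Fixpoint liftto (G : CubCat) (N : nat) (t : elt G) : option (cell G N) :=
  match @eqnP (projT1 t) N with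
  | ReflectT e => Some (eq_rect _ (cell G) (projT2 t) _ e)
  | ReflectF _ =>
      match N as N0 return option (cell G N0) with
      | 0 => None
      | S N' => option_map (degen G N' 1) (liftto G N' t)
      end
  end.

Definition compAt (G : CubCat) (N j : nat) : cell G N -> cell G N -> cell G N :=
  match N as N0 return cell G N0 -> cell G N0 -> cell G N0 with
  | 0 => fun x _ => x
  | S M => comp G M j
  end.

(* x #_p y = x o_{N-p} y, computed at a common dimension N > p. *)
Definition cglob (G : CubCat) (p : nat) (t u : elt G) : elt G :=
  let N := maxn (maxn (projT1 t) (projT1 u)) p.+1 in
  match liftto G N t, liftto G N u with
  | Some x, Some y => existT _ N (compAt G N (N - p) x y)
  | _, _ => t
  end.

(* Setoid presentation of a globular omega-category: carrier of
   representatives, the subset of actual cells, the equality, the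
   source/target maps d^a_p and compositions #_p (x #_p y defined iff
   d^+_p x = d^-_p y). *)
Record OmegaS := {
  ocar : Type;
  omem : ocar -> Prop;
  oeq : ocar -> ocar -> Prop;
  od : bool -> nat -> ocar -> ocar;
  ocomp : nat -> ocar -> ocar -> ocar
}.

Definition gammaS (G : CubCat) : OmegaS :=
  {| ocar := elt G; omem := inPhi G; oeq := crel G;
     od := dglob G; ocomp := cglob G |}.

Definition omega_morph (A B : OmegaS) (phi : ocar A -> ocar B) : Prop :=
  (forall x, omem A x -> omem B (phi x)) /\
  (forall x y, omem A x -> omem A y -> oeq A x y -> oeq B (phi x) (phi y)) /\
  (forall a p x, omem A x -> oeq B (phi (od A a p x)) (od B a p (phi x))) /\
  (forall p x y, omem A x -> omem A y -> oeq A (od A true p x) (od A false p y) ->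
     oeq B (phi (ocomp A p x y)) (ocomp B p (phi x) (phi y))).

Definition omega_iso (A B : OmegaS) (phi : ocar A -> ocar B) : Prop :=
  omega_morph A B phi /\
  exists psi0 : ocar B -> ocar A, omega_morph B A psi0 /\
    (forall x, omem A x -> oeq A (psi0 (phi x)) x) /\
    (forall y, omem B y -> oeq B (phi (psi0 y)) y).

Definition gamma_map (G H : CubCat) (f : CubMorph G H) (t : elt G) : elt H :=
  existT _ (projT1 t) (fmap G H f (projT1 t) (projT2 t)).

(* Main.v *)
Set Warnings "-notation-overridden".
Require Import Defs.
From mathcomp Require Import all_boot zify.
From Stdlib Require Import ClassicalEpsilon.


Notation cmp := Defs.comp.

Definition LCf (C : CubCat) n i (x : cell C n.+2) : cell C n.+2 :=
  cmp C n.+1 i.+1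
    (cmp C n.+1 i.+1
       (degen C n.+1 i (face C n.+1 i false (conn C n.+1 i true (face C n.+1 i.+1 false x))))
       (degen C n.+1 i (face C n.+1 i false x)))
    (conn C n.+1 i true (face C n.+1 i.+1 true x)).

Definition RCf (C : CubCat) n i (x : cell C n.+2) : cell C n.+2 :=
  cmp C n.+1 i.+1 (conn C n.+1 i false (face C n.+1 i.+1 false x))
    (degen C n.+1 i (face C n.+1 i true x)).


Lemma recovery_all (C : CubCat) n i (x : cell C n.+2) : 1 <= i <= n.+1 ->
  [/\ face C n.+1 i true (LCf C n i x) = face C n.+1 i false (psi C n i x),
      cmp C n.+1 i (LCf C n i x) (psi C n i x) =
        cmp C n.+1 i.+1 (conn C n.+1 i true (face C n.+1 i.+1 false x)) x,
      face C n.+1 i true (cmp C n.+1 i.+1 (conn C n.+1 i true (face C n.+1 i.+1 false x)) x)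
        = face C n.+1 i false (RCf C n i x) &
      cmp C n.+1 i (cmp C n.+1 i (LCf C n i x) (psi C n i x)) (RCf C n i x) = x].
Proof.
move=> Hi.
have Hi2 : 1 <= i.+1 <= n.+2 by lia.
have Hi3 : 1 <= i <= n.+2 by lia.
have Hlt : 1 <= i < i.+1 by lia.
have Hle : i.+1 <= n.+2 by lia.
have Hne : i.+1 != i by lia.
set a := face C n.+1 i.+1 false x.
set b := face C n.+1 i.+1 true x.
have Fsame : forall al u, face C n.+1 i al (conn C n.+1 i al u) = u /\
                          face C n.+1 i.+1 al (conn C n.+1 i al u) = u.
  by move=> al u; apply: face_conn_same.
have Fopp : forall al u, face C n.+1 i al (conn C n.+1 i (~~ al) u) = degen C n i (face C n i al u) /\
                          face C n.+1 i.+1 al (conn C n.+1 i (~~ al) u) = degen C n i (face C n i al u).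
  by move=> al u; apply: face_conn_opp.
have F3 : forall u, face C n.+1 i false (conn C n.+1 i true u) = degen C n i (face C n i false u) /\
                    face C n.+1 i.+1 false (conn C n.+1 i true u) = degen C n i (face C n i false u).
  by move=> u; exact: (Fopp false u).
have F4 : forall u, face C n.+1 i true (conn C n.+1 i false u) = degen C n i (face C n i true u) /\
                    face C n.+1 i.+1 true (conn C n.+1 i false u) = degen C n i (face C n i true u).
  by move=> u; exact: (Fopp true u).
have F5 : forall al v, face C n.+1 i al (degen C n.+1 i v) = v.
  by move=> al v; apply: face_degen_eq.
have F6 : forall al v, face C n.+1 i.+1 al (degen C n.+1 i v) = degen C n i (face C n i al v).
  by move=> al v; apply: face_degen_gt.
have F7 : forall al be, face C n i al (face C n.+1 i.+1 be x) = face C n i be (face C n.+1 i al x).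
  by move=> al be; apply: face_face.
have Fdd : forall al (w : cell C n), face C n i al (degen C n i w) = w.
  by move=> al w; apply: face_degen_eq; lia.
set G1 := conn C n.+1 i true a.
set P1 := cmp C n.+1 i.+1 G1 x.
set Gm := conn C n.+1 i false b.
have c1 : face C n.+1 i.+1 true G1 = face C n.+1 i.+1 false x by rewrite (Fsame true a).2.
have Pb : face C n.+1 i.+1 true P1 = b by rewrite comp_face_plus.
have c2 : face C n.+1 i.+1 true P1 = face C n.+1 i.+1 false Gm by rewrite Pb (Fsame false b).2.
set L1 := degen C n.+1 i (face C n.+1 i false G1).
set L2 := degen C n.+1 i (face C n.+1 i false x).
set L3 := conn C n.+1 i true b.
set A := cmp C n.+1 i.+1 L1 L2.
have c3 : face C n.+1 i.+1 true L1 = face C n.+1 i.+1 false L2.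
  by rewrite !F6 (F3 a).1 Fdd /a F7.
have c4 : face C n.+1 i.+1 true A = face C n.+1 i.+1 false L3.
  by rewrite comp_face_plus // F6 (F3 b).2 /b F7.
have c5 : face C n.+1 i true A = face C n.+1 i false P1.
  by rewrite !comp_face_lt // !F5.
have c6 : face C n.+1 i true L3 = face C n.+1 i false Gm.
  by rewrite (Fsame true b).1 (Fsame false b).1.
have E1 : cmp C n.+1 i (LCf C n i x) (psi C n i x) = P1.
  rewrite /LCf -/a -/b -/G1 -/L1 -/L2 -/L3 -/A /psi -/a -/b -/G1 -/P1 -/Gm.
  rewrite (Defs.interchange C n.+1 i.+1 i A L3 P1 Gm) //.
  have c10 : face C n.+1 i true L1 = face C n.+1 i false G1 by rewrite F5.
  have c11 : face C n.+1 i true L2 = face C n.+1 i false x by rewrite F5.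
  rewrite /A (Defs.interchange C n.+1 i.+1 i L1 L2 G1 x) // /L1 /L2 !comp_id_l //.
  by rewrite /L3 /Gm (conn_cancel C n i b Hi).1 -Pb comp_id_r.
set R2 := degen C n.+1 i (face C n.+1 i true x).
set Ga := conn C n.+1 i false a.
have c7 : face C n.+1 i.+1 true Ga = face C n.+1 i.+1 false R2.
  by rewrite (F4 a).2 F6 /a F7.
have c8 : face C n.+1 i true G1 = face C n.+1 i false Ga by rewrite (Fsame true a).1 (Fsame false a).1.
have c9 : face C n.+1 i true x = face C n.+1 i false R2 by rewrite F5.
split => //.
- rewrite /LCf -/a -/b -/G1 -/L1 -/L2 -/L3 -/A /psi -/a -/b -/G1 -/P1 -/Gm.
  rewrite (comp_face_lt C n i i.+1 true A L3) // (comp_face_lt C n i i.+1 false P1 Gm) //.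
  by rewrite c5 c6.
- rewrite /RCf -/a -/Ga -/R2 (comp_face_lt C n i i.+1 false Ga R2) // (comp_face_lt C n i i.+1 true G1 x) //.
  by rewrite c8 c9.
- rewrite E1 /RCf -/a -/Ga -/R2 (Defs.interchange C n.+1 i.+1 i G1 x Ga R2) //.
  rewrite (conn_cancel C n i a Hi).1 comp_id_r //.
  by rewrite /a comp_id_l.
Qed.

Lemma c1 (C : CubCat) n i (x : cell C n.+2) : 1 <= i <= n.+1 ->
  face C n.+1 i.+1 true (conn C n.+1 i true (face C n.+1 i.+1 false x)) = face C n.+1 i.+1 false x.
Proof. by move=> Hi; case: (face_conn_same C n.+1 i true (face C n.+1 i.+1 false x) Hi). Qed.

Lemma c2 (C : CubCat) n i (x : cell C n.+2) : 1 <= i <= n.+1 ->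
  face C n.+1 i.+1 true (cmp C n.+1 i.+1 (conn C n.+1 i true (face C n.+1 i.+1 false x)) x)
  = face C n.+1 i.+1 false (conn C n.+1 i false (face C n.+1 i.+1 true x)).
Proof.
move=> Hi; rewrite comp_face_plus; [|lia|exact: c1].
by case: (face_conn_same C n.+1 i false (face C n.+1 i.+1 true x) Hi).
Qed.

Lemma LR_compat (C : CubCat) n i (x : cell C n.+2) : 1 <= i <= n.+1 ->
  let a := face C n.+1 i.+1 false x in let b := face C n.+1 i.+1 true x in
  [/\ face C n.+1 i.+1 true (degen C n.+1 i (face C n.+1 i false (conn C n.+1 i true a)))
      = face C n.+1 i.+1 false (degen C n.+1 i (face C n.+1 i false x)),
      face C n.+1 i.+1 true (cmp C n.+1 i.+1
       (degen C n.+1 i (face C n.+1 i false (conn C n.+1 i true a)))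
       (degen C n.+1 i (face C n.+1 i false x))) = face C n.+1 i.+1 false (conn C n.+1 i true b) &
      face C n.+1 i.+1 true (conn C n.+1 i false a) =
      face C n.+1 i.+1 false (degen C n.+1 i (face C n.+1 i true x))].
Proof.
move=> Hi a b.
have Hi2 : 1 <= i.+1 <= n.+2 by lia.
have Hlt : 1 <= i < i.+1 by lia.
have Hle : i.+1 <= n.+2 by lia.
have Fopp : forall al u, face C n.+1 i al (conn C n.+1 i (~~ al) u) = degen C n i (face C n i al u) /\
                          face C n.+1 i.+1 al (conn C n.+1 i (~~ al) u) = degen C n i (face C n i al u).
  by move=> al u; apply: face_conn_opp.
have F3 : forall u, face C n.+1 i false (conn C n.+1 i true u) = degen C n i (face C n i false u) /\
                    face C n.+1 i.+1 false (conn C n.+1 i true u) = degen C n i (face C n i false u).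
  by move=> u; exact: (Fopp false u).
have F4 : forall u, face C n.+1 i true (conn C n.+1 i false u) = degen C n i (face C n i true u) /\
                    face C n.+1 i.+1 true (conn C n.+1 i false u) = degen C n i (face C n i true u).
  by move=> u; exact: (Fopp true u).
have F6 : forall al v, face C n.+1 i.+1 al (degen C n.+1 i v) = degen C n i (face C n i al v).
  by move=> al v; apply: face_degen_gt.
have F7 : forall al be, face C n i al (face C n.+1 i.+1 be x) = face C n i be (face C n.+1 i al x).
  by move=> al be; apply: face_face.
have Fdd : forall al (w : cell C n), face C n i al (degen C n i w) = w.
  by move=> al w; apply: face_degen_eq; lia.
have c3 : face C n.+1 i.+1 true (degen C n.+1 i (face C n.+1 i false (conn C n.+1 i true a)))
      = face C n.+1 i.+1 false (degen C n.+1 i (face C n.+1 i false x)).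
  by rewrite !F6 (F3 a).1 Fdd /a F7.
split => //.
- by rewrite comp_face_plus // F6 (F3 b).2 /b F7.
- by rewrite (F4 a).2 F6 /a F7.
Qed.


Definition stepE (C : CubCat) (t : elt C) : elt C :=
  existT _ (projT1 t).+1 (degen C (projT1 t) 1 (projT2 t)).

Definition downE (C : CubCat) (t : elt C) : elt C :=
  match t with existT n w =>
    match n as n0 return cell C n0 -> elt C with
    | 0 => fun w => existT _ 0 w
    | S n' => fun w => existT _ n' (face C n' 1 false w)
    end w
  end.

Lemma downE_stepE C t : downE C (stepE C t) = t.
Proof. by case: t => n w /=; rewrite face_degen_eq. Qed.

Lemma iter_stepE_inj C k t u : iter k (stepE C) t = iter k (stepE C) u -> t = u.
Proof.
elim: k => // k IH /= E; apply: IH.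
by rewrite -(downE_stepE C (iter k _ t)) E downE_stepE.
Qed.

Lemma dim_iter C k t : projT1 (iter k (stepE C) t) = k + projT1 t.
Proof. by elim: k => //= k ->. Qed.

Lemma up_iter C t k : up C t k = iter k (stepE C) t.
Proof. case: t => n x; elim: k => // k IH; rewrite iterS -IH. by []. Qed.

Lemma existT_inj C n (x y : cell C n) : existT (cell C) n x = existT (cell C) n y -> x = y.
Proof. exact: (Eqdep_dec.inj_pair2_eq_dec nat PeanoNat.Nat.eq_dec (cell C) n x y). Qed.

Lemma iter_eq_same C k l t u : iter k (stepE C) t = iter l (stepE C) u ->
  projT1 t = projT1 u -> t = u.
Proof.
move=> E D.
have : k = l.
  have := f_equal (@projT1 _ _) E; rewrite !dim_iter D; lia.
move=> kl; subst l; exact: iter_stepE_inj E.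
Qed.

Lemma crel_trans C t u v : crel C t u -> crel C t v -> projT1 u = projT1 v -> u = v.
Proof.
move=> [k [l E1]] [k' [l' E2]] D.
rewrite !up_iter in E1 E2.
apply: (iter_eq_same C (k' + l) (k + l') u v _ D).
by rewrite !iterD -E1 -E2 -!iterD addnC.
Qed.


Lemma psi_fmap G H (f : CubMorph G H) n i (x : cell G n.+2) : 1 <= i <= n.+1 ->
  fmap G H f n.+2 (psi G n i x) = psi H n i (fmap G H f n.+2 x).
Proof.
move=> Hi; have Hi2 : 1 <= i.+1 <= n.+2 by lia.
rewrite /psi fmap_comp //; last exact: c2.
rewrite fmap_comp //; last exact: c1.
by rewrite !fmap_conn // !fmap_face.
Qed.

Lemma psiAt_fmap G H (f : CubMorph G H) m i (x : cell G m) : 1 <= i < m ->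
  fmap G H f m (psiAt G m i x) = psiAt H m i (fmap G H f m x).
Proof.
case: m x => [|[|n]] x Hi //=.
apply: psi_fmap; lia.
Qed.

Lemma foldl_comm (A B : Type) (h : A -> B) (F : A -> nat -> A) (FB : B -> nat -> B) s :
  (forall i, i \in s -> forall x, h (F x i) = FB (h x) i) ->
  forall x, h (foldl F x s) = foldl FB (h x) s.
Proof.
elim: s => //= j s IH Hc x.
rewrite IH; first by rewrite Hc // mem_head.
by move=> i Hi; apply: Hc; rewrite in_cons Hi orbT.
Qed.

Lemma foldl_inj (A B : Type) (h : A -> B) (F : A -> nat -> A) (FB : B -> nat -> B) s :
  (forall i, i \in s -> forall x, h (F x i) = FB (h x) i) ->
  (forall i, i \in s -> forall x y, h x = h y -> F x i = F y i -> x = y) ->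
  forall x y, h x = h y -> foldl F x s = foldl F y s -> x = y.
Proof.
elim: s => //= j s IH Hc Hp x y Exy E.
apply: (Hp j (mem_head _ _)) => //.
apply: (IH _ _ (F x j) (F y j) _ E).
- by move=> i Hi; apply: Hc; rewrite in_cons Hi orbT.
- by move=> i Hi; apply: Hp; rewrite in_cons Hi orbT.
- by rewrite !Hc ?mem_head // Exy.
Qed.

Lemma foldl_sur (B : Type) (P : B -> Prop) (FB : B -> nat -> B) s :
  (forall i, i \in s -> forall y, P (FB y i) -> P y) ->
  forall y, P (foldl FB y s) -> P y.
Proof.
elim: s => //= j s IH Hp y Py.
apply: (Hp j (mem_head _ _)); apply: IH Py.
by move=> i Hi; apply: Hp; rewrite in_cons Hi orbT.
Qed.

Lemma mem_PsiIdx m r i : r \in rev (iota 1 m) -> i \in iota 1 r.-1 -> 1 <= i < m.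
Proof. rewrite mem_rev !mem_iota; lia. Qed.

Lemma PsiAt_fmap G H (f : CubMorph G H) m r (x : cell G m) : 1 <= r <= m ->
  fmap G H f m (PsiAt G m r x) = PsiAt H m r (fmap G H f m x).
Proof.
move=> Hr; rewrite /PsiAt; apply: foldl_comm => i Hi y.
apply: psiAt_fmap; move: Hi; rewrite mem_iota; lia.
Qed.

Lemma PhiAt_fmap G H (f : CubMorph G H) m (x : cell G m) :
  fmap G H f m (PhiAt G m x) = PhiAt H m (fmap G H f m x).
Proof.
rewrite /PhiAt; apply: foldl_comm => r Hr y.
apply: PsiAt_fmap; move: Hr; rewrite mem_rev mem_iota; lia.
Qed.


Definition injm G H (f : CubMorph G H) m :=
  forall x y : cell G m, fmap G H f m x = fmap G H f m y -> x = y.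
Arguments injm {G H} f m.

Lemma psiAt_P G H (f : CubMorph G H) m i : 1 <= i < m ->
  (forall k, m = k.+2 -> injm f k.+1) ->
  forall x y, fmap G H f m x = fmap G H f m y -> psiAt G m i x = psiAt G m i y -> x = y.
Proof.
case: m => [|[|n]] Hi Hinj x y Exy //=.
have {}Hinj := Hinj n erefl.
have Hi' : 1 <= i <= n.+1 by lia.
have Hf : forall j a, 1 <= j <= n.+2 -> face G n.+1 j a x = face G n.+1 j a y.
  by move=> j a Hj; apply: Hinj; rewrite !fmap_face // Exy.
move=> Ep.
have [_ _ _ Rx] := recovery_all G n i x Hi'.
have [_ _ _ Ry] := recovery_all G n i y Hi'.
have EL : LCf G n i x = LCf G n i y.
  rewrite /LCf !Hf //; lia.
have ER : RCf G n i x = RCf G n i y.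
  rewrite /RCf !Hf //; lia.
by rewrite -Rx -Ry EL ER Ep.
Qed.

Lemma Phi_P G H (f : CubMorph G H) m :
  (forall k, m = k.+2 -> injm f k.+1) ->
  forall x y, fmap G H f m x = fmap G H f m y -> PhiAt G m x = PhiAt G m y -> x = y.
Proof.
move=> Hinj; apply: (foldl_inj _ _ (fmap G H f m) (fun y r => PsiAt G m r y) (fun y r => PsiAt H m r y) (rev (iota 1 m))).
- move=> r Hr z; apply: PsiAt_fmap; move: Hr; rewrite mem_rev mem_iota; lia.
move=> r Hr; apply: (foldl_inj _ _ (fmap G H f m) (fun y i => psiAt G m i y) (fun y i => psiAt H m i y) (iota 1 r.-1)).
- move=> i Hi z; apply: psiAt_fmap; exact: (mem_PsiIdx _ _ _ Hr Hi).
move=> i Hi; apply: psiAt_P => //; exact: (mem_PsiIdx _ _ _ Hr Hi).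
Qed.

Lemma Phi_eq G H (f : CubMorph G H) (psi0 : elt H -> elt G)
  (Hl : forall x, inPhi G x -> crel G (psi0 (gamma_map G H f x)) x) m (x y : cell G m) :
  fmap G H f m x = fmap G H f m y -> PhiAt G m x = PhiAt G m y.
Proof.
move=> Exy.
have E : gamma_map G H f (existT _ m (PhiAt G m x)) = gamma_map G H f (existT _ m (PhiAt G m y)).
  by rewrite /gamma_map /= !PhiAt_fmap Exy.
have H1 := Hl (existT _ m (PhiAt G m x)) (ex_intro _ x erefl).
have H2 := Hl (existT _ m (PhiAt G m y)) (ex_intro _ y erefl).
rewrite E in H1.
exact: (existT_inj _ _ _ _ (crel_trans _ _ _ _ H1 H2 erefl)).
Qed.

Lemma inj_all G H (f : CubMorph G H) (psi0 : elt H -> elt G)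
  (Hl : forall x, inPhi G x -> crel G (psi0 (gamma_map G H f x)) x) m : injm f m.
Proof.
elim: m => [|m IH] x y Exy.
- apply: (Phi_P G H f _) => //; last exact: (Phi_eq G H f psi0 Hl _ _ _ Exy).
- apply: (Phi_P G H f _) => //; last exact: (Phi_eq G H f psi0 Hl _ _ _ Exy).
  by move=> k [<-].
Qed.


Definition hasPre G H (f : CubMorph G H) m (y : cell H m) := exists x, fmap G H f m x = y.
Arguments hasPre {G H} f m y.
Definition surm G H (f : CubMorph G H) m := forall y, hasPre f m y.
Arguments surm {G H} f m.

Lemma hasPre_comp G H (f : CubMorph G H) n j (u v : cell H n.+1) :
  injm f n -> hasPre f n.+1 u -> hasPre f n.+1 v -> 1 <= j <= n.+1 ->
  face H n j true u = face H n j false v -> hasPre f n.+1 (cmp H n j u v).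
Proof.
move=> Hinj [p <-] [q <-] Hj E.
have Epq : face G n j true p = face G n j false q by apply: Hinj; rewrite !fmap_face.
by exists (cmp G n j p q); rewrite fmap_comp.
Qed.

Lemma hasPre_degen G H (f : CubMorph G H) n i (y : cell H n) :
  surm f n -> 1 <= i <= n.+1 -> hasPre f n.+1 (degen H n i y).
Proof. move=> Hs Hi; have [p <-] := Hs y; by exists (degen G n i p); rewrite fmap_degen. Qed.

Lemma hasPre_conn G H (f : CubMorph G H) n i a (y : cell H n) :
  surm f n -> 1 <= i <= n -> hasPre f n.+1 (conn H n i a y).
Proof. move=> Hs Hi; have [p <-] := Hs y; by exists (conn G n i a p); rewrite fmap_conn. Qed.

Lemma psiAt_Q G H (f : CubMorph G H) m i : 1 <= i < m ->
  (forall k, m = k.+2 -> injm f k.+1 /\ surm f k.+1) ->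
  forall y, hasPre f m (psiAt H m i y) -> hasPre f m y.
Proof.
case: m => [|[|n]] Hi Hk y //=.
have [Hinj Hs] := Hk n erefl.
have Hi' : 1 <= i <= n.+1 by lia.
have Hi2 : 1 <= i.+1 <= n.+2 by lia.
have Hi3 : 1 <= i <= n.+2 by lia.
move=> Hp.
have [e1 e2 e3 e4] := recovery_all H n i y Hi'.
have [d1 d2 d3] := LR_compat H n i y Hi'.
rewrite -e4; apply: hasPre_comp => //; last by rewrite e2.
- apply: hasPre_comp => //.
  rewrite /LCf; apply: hasPre_comp => //.
  + apply: hasPre_comp => //; exact: hasPre_degen.
  + exact: hasPre_conn.
- rewrite /RCf; apply: hasPre_comp => //.
  + exact: hasPre_conn.
  + exact: hasPre_degen.
Qed.

Lemma Phi_Q G H (f : CubMorph G H) m :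
  (forall k, m = k.+2 -> injm f k.+1 /\ surm f k.+1) ->
  forall y, hasPre f m (PhiAt H m y) -> hasPre f m y.
Proof.
move=> Hk; apply: (foldl_sur _ (hasPre f m) (fun y r => PsiAt H m r y) (rev (iota 1 m))).
move=> r Hr; apply: (foldl_sur _ (hasPre f m) (fun y i => psiAt H m i y) (iota 1 r.-1)).
move=> i Hi; apply: psiAt_Q => //; exact: (mem_PsiIdx _ _ _ Hr Hi).
Qed.

Lemma gamma_step G H (f : CubMorph G H) t :
  gamma_map G H f (stepE G t) = stepE H (gamma_map G H f t).
Proof. by case: t => n w; rewrite /gamma_map /stepE /= fmap_degen. Qed.

Lemma gamma_down G H (f : CubMorph G H) t :
  gamma_map G H f (downE G t) = downE H (gamma_map G H f t).
Proof. by case: t => [[|n] w] //; rewrite /gamma_map /downE /= fmap_face. Qed.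

Lemma gamma_iter G H (f : CubMorph G H) k t :
  gamma_map G H f (iter k (stepE G) t) = iter k (stepE H) (gamma_map G H f t).
Proof. by elim: k => //= k <-; rewrite gamma_step. Qed.

Lemma lift_pre G H (f : CubMorph G H) k : forall t u,
  gamma_map G H f t = iter k (stepE H) u -> exists t0, gamma_map G H f t0 = u.
Proof.
elim: k => [|k IH] t u E; first by exists t.
apply: (IH (downE G t)).
by rewrite gamma_down E iterS downE_stepE.
Qed.

Lemma crel_pre G H (f : CubMorph G H) t u : crel H (gamma_map G H f t) u ->
  exists t0, gamma_map G H f t0 = u.
Proof.
move=> [k [l]]; rewrite !up_iter => E.
case: (leqP k l) => Hkl.
- apply: (lift_pre G H f (l - k) t u).
  apply: (iter_stepE_inj H k).
  by rewrite -iterD subnKC.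
- exists (iter (k - l) (stepE G) t).
  rewrite gamma_iter; apply: (iter_stepE_inj H l).
  rewrite -iterD subnKC ?E //; lia.
Qed.

Lemma Phi_pre G H (f : CubMorph G H) (psi0 : elt H -> elt G)
  (Hr : forall y, inPhi H y -> crel H (gamma_map G H f (psi0 y)) y) m (y : cell H m) :
  hasPre f m (PhiAt H m y).
Proof.
have [t0 E] := crel_pre G H f _ _ (Hr (existT _ m (PhiAt H m y)) (ex_intro _ y erefl)).
case: t0 E => n w E; have nm := f_equal (@projT1 _ _) E; simpl in nm; subst n.
by exists w; apply: (existT_inj _ _ _ _ E).
Qed.

Lemma sur_all G H (f : CubMorph G H) (psi0 : elt H -> elt G)
  (Hl : forall x, inPhi G x -> crel G (psi0 (gamma_map G H f x)) x)
  (Hr : forall y, inPhi H y -> crel H (gamma_map G H f (psi0 y)) y) m : surm f m.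
Proof.
elim: m => [|m IH] y; apply: Phi_Q; try exact: (Phi_pre G H f psi0 Hr).
- by [].
- move=> k [<-]; split => //; exact: (inj_all G H f psi0 Hl).
Qed.


Theorem theorem8p6 (G H : CubCat) (f : CubMorph G H) :
  omega_iso (gammaS G) (gammaS H) (gamma_map G H f) -> cub_iso G H f.
Proof.
move=> [_ [psi0 [_ [Hl Hr]]]].
have Hinj := inj_all G H f psi0 Hl.
have Hs := sur_all G H f psi0 Hl Hr.
pose g := fun n y => proj1_sig (constructive_indefinite_description _ (Hs n y)).
have gK : forall n y, fmap G H f n (g n y) = y.
  by move=> n y; rewrite /g; case: constructive_indefinite_description.
have Kg : forall n x, g n (fmap G H f n x) = x.
  by move=> n x; apply: (Hinj); rewrite gK.
have p1 : forall n i a (x : cell H n.+1), 1 <= i <= n.+1 ->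
    g n (face H n i a x) = face G n i a (g n.+1 x).
  move=> n i a x Hi; apply: (Hinj); by rewrite fmap_face // !gK.
have p2 : forall n i (x : cell H n), 1 <= i <= n.+1 ->
    g n.+1 (degen H n i x) = degen G n i (g n x).
  move=> n i x Hi; apply: (Hinj); by rewrite fmap_degen // !gK.
have p3 : forall n i a (x : cell H n), 1 <= i <= n ->
    g n.+1 (conn H n i a x) = conn G n i a (g n x).
  move=> n i a x Hi; apply: (Hinj); by rewrite fmap_conn // !gK.
have p4 : forall n j (x y : cell H n.+1), 1 <= j <= n.+1 ->
    face H n j true x = face H n j false y ->
    g n.+1 (Defs.comp H n j x y) = Defs.comp G n j (g n.+1 x) (g n.+1 y).
  move=> n j x y Hj E; apply: (Hinj).
  have E' : face G n j true (g n.+1 x) = face G n j false (g n.+1 y).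
    by apply: (Hinj); rewrite !fmap_face // !gK.
  by rewrite fmap_comp // !gK.
by exists (@Build_CubMorph H G g p1 p2 p3 p4).
Qed.
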